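(* In the BTS-RED-Known setting, let $p=\frac{1}{4e\sqrt\pi}$ and let $S_t=\{\boldsymbol x\in\mathcal X:\Delta(\boldsymbol x)>c_t\sigma_{t-1}(\boldsymbol x)\}$ be the set of saturated points, where $\Delta(\boldsymbol x)=f(\boldsymbol x^* )-f(\boldsymbol x)$. For every $t\ge1$ and every history $\mathcal F_{t-1}$ on which $E^f(t)$ holds, $$\mathbb P\big(\boldsymbol x^{(b)}_t\in\mathcal X\setminus S_t\mid\mathcal F_{t-1}\big)\ge p-1/t^2\qquad\text{for all }b\in[b_t].$$
   Context: Setting (BTS-RED-Known). $\mathcal X$ is a finite set; $k$ is a squared-exponential kernel on $\mathcal X$ (so $k(\boldsymbol x,\boldsymbol x)=1$); the unknown objective $f:\mathcal X\to\mathbb R$ lies in the RKHS $\mathcal H_k$ with $\|f\|_{\mathcal H_k}\le B$ for a known $B>0$. A known noise variance function $\sigma^2:\mathcal X\to(0,\infty)$ has maximum value $\sigma^2_{\max}$. Querying $\boldsymbol x$ once returns $f(\boldsymbol x)+\epsilon$ with $\epsilon\sim\mathcal N(0,\sigma^2(\boldsymbol x))$, independently across queries. Fix a horizon $T$, a total budget $\mathbb B\in\mathbb N$, an effective noise variance $R^2>0$, $\delta\in(0,1)$, and $\lambda=1+2/T$. GP posterior: given data pairs $(\boldsymbol x_i,y_i)_{i=1}^m$, $\mu(\boldsymbol x)=\boldsymbol k(\boldsymbol x)^\top(\boldsymbol K+\lambda I)^{-1}\boldsymbol y$ and $s^2(\boldsymbol x,\boldsymbol x')=k(\boldsymbol x,\boldsymbol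 x')-\boldsymbol k(\boldsymbol x)^\top(\boldsymbol K+\lambda I)^{-1}\boldsymbol k(\boldsymbol x')$, with $\boldsymbol k(\boldsymbol x)=(k(\boldsymbol x,\boldsymbol x_i))_i$, $\boldsymbol K=(k(\boldsymbol x_i,\boldsymbol x_j))_{ij}$, $\boldsymbol y=(y_i)_i$. $\mu_{t-1}$ and $\sigma^2_{t-1}(\cdot,\cdot)$ denote these quantities computed from all pairs collected in iterations $1,\dots,t-1$, and $\sigma_{t-1}(\boldsymbol x)=\sqrt{\sigma^2_{t-1}(\boldsymbol x,\boldsymbol x)}$. Algorithm: in iteration $t$, for $b=1,2,\dots$: draw $f^{(b)}_t$ (independently, given the past) from the Gaussian process with mean $\mu_{t-1}$ and covariance $\beta_t^2\sigma^2_{t-1}(\cdot,\cdot)$; set $\boldsymbol x^{(b)}_t\in\arg\max_{\boldsymbol x\in\mathcal X}f^{(b)}_t(\boldsymbol x)$ and $n^{(b)}_t=\lceil\sigma^2(\boldsymbol x^{(b)}_t)/R^2\rceil$; stop at the first $b$ with $\sum_{b'\le b}n^{(b')}_t\ge\mathbb B$ and set $b_t=b-1$. Each $\boldsymbol x^{(b)}_t$, $b\in[b_t]=\{1,\dots,b_t\}$, is queried $n^{(b)}_t$ times, the empirical mean $y^{(b)}_t$ of these replicates is recorded, and the pairs $(\boldsymbol x^{(b)}_t,y^{(b)}_t)_{b\in[b_t]}$ are added to the data. $\tau_{t-1}=\sum_{t'=1}^{t-1}b_{t'}$. $\mathcal F_{t-1}$ denotes the history of all observations up to and including iteration $t-1$.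 $\Gamma_m$ is the maximum information gain $\max_{|A|\le m}\tfrac12\log\det(I+\lambda^{-1}K_A)$. $\beta_t=B+R\sqrt{2(\Gamma_{\tau_{t-1}}+1+\log(2/\delta))}$, $c_t=\beta_t(1+\sqrt{2\log(\mathbb B|\mathcal X|t^2)})$. $\boldsymbol x^*\in\arg\max_{\mathcal X}f$. $E^f(t)$ is the event that $|\mu_{t-1}(\boldsymbol x)-f(\boldsymbol x)|\le\beta_t\sigma_{t-1}(\boldsymbol x)$ for all $\boldsymbol x\in\mathcal X$. *)

(* Defs.v *)
From HB Require Import structures.
From mathcomp Require Import all_boot all_order all_algebra.
From mathcomp Require Import all_classical all_reals all_analysis.
Set Implicit Arguments. Unset Strict Implicit. Unset Printing Implicit Defensive.
Import Order.TTheory GRing.Theory Num.Theory.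
Local Open Scope classical_set_scope.
Local Open Scope ring_scope.

Definition se_kernel {R : realType} {dim : nat} {X : finType}
  (pt : X -> 'rV[R]_dim) (ell : R) (x y : X) : R :=
  expR (- (\sum_(i < dim) (pt x 0 i - pt y 0 i) ^+ 2) / (2 * ell ^+ 2)).

(* ||f||_{H_k} <= B on a finite X: H_k = span{k(.,y)}, with
   || sum_y a_y k(.,y) ||^2 = sum_{x,y} a_x a_y k(x,y). *)
Definition rkhs_norm_le {R : realType} {X : finType}
  (k : X -> X -> R) (f : X -> R) (B : R) : Prop :=
  exists a : X -> R, (forall x, f x = \sum_(y : X) a y * k x y) /\
    \sum_(x : X) \sum_(y : X) a x * a y * k x y <= B ^+ 2.

Definition gram {R : realType} {X : finType} (k : X -> X -> R) {m : nat}
  (xs : 'I_m -> X) : 'M[R]_m := \matrix_(i, j) k (xs i) (xs j).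

Definition kvec {R : realType} {X : finType} (k : X -> X -> R) {m : nat}
  (xs : 'I_m -> X) (x : X) : 'rV[R]_m := \row_i k x (xs i).

Definition post_mean {R : realType} {X : finType} (k : X -> X -> R) (lam : R)
  {m : nat} (xs : 'I_m -> X) (ys : 'I_m -> R) (x : X) : R :=
  (kvec k xs x *m invmx (gram k xs + lam%:M) *m (\col_i ys i)) 0 0.

Definition post_cov {R : realType} {X : finType} (k : X -> X -> R) (lam : R)
  {m : nat} (xs : 'I_m -> X) (x x' : X) : R :=
  k x x' - (kvec k xs x *m invmx (gram k xs + lam%:M) *m (kvec k xs x')^T) 0 0.

Definition post_sd {R : realType} {X : finType} (k : X -> X -> R) (lam : R)
  {m : nat} (xs : 'I_m -> X) (x : X) : R :=
  Num.sqrt (post_cov k lam xs x x).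

Definition info_gain {R : realType} {X : finType} (k : X -> X -> R) (lam : R)
  {n : nat} (s : n.-tuple X) : R :=
  2^-1 * ln (\det (1%:M + lam^-1 *: (\matrix_(i, j) k (tnth s i) (tnth s j) : 'M[R]_n))).

Definition max_info_gain {R : realType} {X : finType} (k : X -> X -> R) (lam : R)
  (m : nat) : R :=
  \big[Num.max/0]_(n < m.+1) \big[Num.max/0]_(s : n.-tuple X) info_gain k lam s.

Definition normal_law {R : realType} (mu v : R) : set R -> \bar R :=
  fun A => if v == 0 then dirac mu A else normal_prob mu (Num.sqrt v) A.

(* g is a Gaussian random vector (= GP on the finite set X) with mean mu and
   covariance C: every linear combination is normal with the right
   mean and variance. *)
Definition gaussian_vector {R : realType} {X : finType} {d : measure_display}
  {Omega : measurableType d} (P : probability Omega R)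
  (g : Omega -> X -> R) (mu : X -> R) (C : X -> X -> R) : Prop :=
  (forall x, measurable_fun setT (fun w => g w x)) /\
  forall (a : X -> R) (A : set R), measurable A ->
    P ((fun w => \sum_(x : X) a x * g w x) @^-1` A) =
    normal_law (\sum_(x : X) a x * mu x)
               (\sum_(x : X) \sum_(y : X) a x * a y * C x y) A.

(* Main.v *)
Require Import Defs.
From HB Require Import structures.
From mathcomp Require Import all_boot all_order all_algebra.
From mathcomp Require Import all_classical all_reals all_analysis.
From mathcomp Require Import ring lra zify measurable_realfun.
Import Order.TTheory GRing.Theory Num.Theory.
Local Open Scope classical_set_scope.
Local Open Scope ring_scope.

Section H.
Context {R : realType} {X : finType}.

Lemma sum_delta (x : X) (r : R) (F : X -> R) :
  \sum_(y : X) (r * (y == x)%:R) * F y = r * F x.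
Proof.
rewrite (bigD1 x) //= eqxx mulr1 big1 ?addr0 // => y /negbTE ->.
by rewrite mulr0 mul0r.
Qed.

Lemma sum_delta2 (x : X) (r : R) (C : X -> X -> R) :
  \sum_(x' : X) \sum_(y : X) (r * (x' == x)%:R) * (r * (y == x)%:R) * C x' y
  = r * r * C x x.
Proof.
under eq_bigr do under eq_bigr do rewrite -mulrA.
under eq_bigr do rewrite -mulr_sumr sum_delta.
by rewrite sum_delta mulrA.
Qed.

Lemma coord_law {d} {Omega : measurableType d} (P : probability Omega R)
  (g : Omega -> X -> R) mu C x r (A : set R) :
  gaussian_vector P g mu C -> measurable A ->
  P ((fun w => r * g w x) @^-1` A) = normal_law (r * mu x) (r * r * C x x) A.
Proof.
move=> [_ H] mA; have := H (fun y => r * (y == x)%:R) A mA.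
rewrite sum_delta sum_delta2.
by under eq_fun do rewrite sum_delta.
Qed.

End H.


Section H.
Context {R : realType}.

Lemma normal_law_sq (m s : R) (A : set R) : 0 <= s ->
  normal_law m (s ^+ 2) A = if s == 0 then \d_m A else normal_prob m s A.
Proof.
move=> s0; rewrite /normal_law sqrf_eq0 sqrtr_sqr ger0_norm //.
Qed.

Lemma normal_law_neg (m v : R) (A : set R) : v < 0 -> measurable A ->
  normal_law m v A = lebesgue_measure (`[0, 1]%classic `&` A).
Proof.
move=> v0 mA; rewrite /normal_law lt_eqF // ler0_sqrtr ?ltW //.
rewrite /normal_prob /normal_pdf eqxx integral_indic //.
Qed.
End H.

Lemma C_nonneg {R : realType} {X : finType} {d} {Omega : measurableType d}
  (P : probability Omega R) (g : Omega -> X -> R) mu C x :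
  gaussian_vector P g mu C -> 0 <= C x x.
Proof.
move=> gv; rewrite leNgt; apply/negP => Cneg.
have mI : measurable (`]0, 1]%classic : set R) by [].
have E r : r * r = 1 -> P ((fun w => r * g w x) @^-1` `]0, 1]) = 1%E.
  move=> rr; rewrite (coord_law _ _ _ _ x r _ gv mI) rr mul1r normal_law_neg //.
  rewrite setIidr; last first.
    by move=> y /=; rewrite !in_itv /= => /andP[/ltW -> ->].
  by rewrite lebesgue_measure_itv /= lte_fin ltr01 oppr0 adde0.
have h1 := E 1 (mulr1 _).
have h2 := E (-1) ltac:(by rewrite mulrNN mulr1).
have mA r : measurable ((fun w => r * g w x) @^-1` (`]0, 1]%classic : set R)).
  rewrite -(setTI (_ @^-1` _)); apply: (measurable_realfun.measurable_funM) => //.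
  by case: gv => mg _; exact: mg.
pose A1 := ((fun w => 1 * g w x) @^-1` (`]0, 1]%classic : set R)).
pose A2 := ((fun w => -1 * g w x) @^-1` (`]0, 1]%classic : set R)).
have : (P (A1 `|` A2) <= 1)%E.
  by apply: probability_le1; exact: measurableU (mA 1) (mA (-1)).
have dis : A1 `&` A2 = set0.
  rewrite /A1 /A2; apply/seteqP; split => // w /= []; rewrite !in_itv /= mul1r mulN1r.
  by move=> /andP[a _] /andP[b _]; lra.
rewrite measureU //; try exact: mA.
rewrite [X in (X + _)%R]h1 [X in (_ + X)%R]h2.
by rewrite -EFinD lee_fin; lra.
Qed.


Section H.
Context {R : realType}.

Lemma pdf_pos (m s x : R) : s != 0 ->
  normal_pdf m s x = normal_peak s * normal_fun m s x.
Proof. by move=> s0; rewrite /normal_pdf (negbTE s0). Qed.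

Lemma tail_gen (m s a : R) (Ivl : set R) : 0 < s -> 0 <= a -> measurable Ivl ->
  (forall x, Ivl x -> m + s * a < x) ->
  (normal_prob m s Ivl <= (expR (- a ^+ 2 / 2))%:E)%E.
Proof.
move=> sp a0 mA hI.
have sn0 : s != 0 by rewrite gt_eqF.
set c := expR (- a ^+ 2 / 2).
apply: (@le_trans _ _ (\int[lebesgue_measure]_(x in Ivl) (c * normal_pdf (m + s * a) s x)%:E)%E).
  apply: ge0_le_integral => //.
  - by move=> x _; rewrite lee_fin normal_pdf_ge0.
  - by apply/measurable_EFinP; apply: measurable_funTS; exact: measurable_normal_pdf.
  - apply/measurable_EFinP; apply: measurable_funTS.
    apply: measurable_realfun.measurable_funM => //; exact: measurable_normal_pdf.
  move=> x /hI hx.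
  rewrite lee_fin !pdf_pos // mulrCA ler_pM2l ?normal_peak_gt0 //.
  rewrite /normal_fun /c -expRD ler_expR.
  have h : 0 <= s * a * (x - (m + s * a)).
    by apply: mulr_ge0; [exact: mulr_ge0 (ltW sp) a0 | rewrite subr_ge0 ltW].
  have key : (x - (m + s * a)) ^+ 2 + (s * a) ^+ 2 <= (x - m) ^+ 2 by nra.
  have s2 : 0 < s ^+ 2 *+ 2 by rewrite pmulrn_lgt0 // exprn_gt0.
  have -> : - a ^+ 2 / 2 + - (x - (m + s * a)) ^+ 2 / (s ^+ 2 *+ 2)
          = - ((x - (m + s * a)) ^+ 2 + (s * a) ^+ 2) / (s ^+ 2 *+ 2).
    by field.
  by rewrite !mulNr lerN2 ler_pM2r ?invr_gt0.
under eq_integral do rewrite EFinM.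
rewrite ge0_integralZl //; last first.
  - by rewrite lee_fin expR_ge0.
  - by move=> x _; rewrite lee_fin normal_pdf_ge0.
  - by apply/measurable_EFinP; apply: measurable_funTS; exact: measurable_normal_pdf.
rewrite -[leRHS]mule1 lee_wpmul2l ?lee_fin ?expR_ge0 //.
exact: (@probability_le1 _ _ _ (normal_prob (m + s * a) s)).
Qed.

Lemma tail (m s a : R) : 0 <= s -> 0 <= a ->
  (normal_law m (s ^+ 2) `]((m + s * a)%R), +oo[ <= (expR (- a ^+ 2 / 2))%:E)%E.
Proof.
move=> s0 a0; rewrite normal_law_sq //.
have [->|sn0] := eqVneq s 0.
  by rewrite diracE mul0r addr0 memNset ?lee_fin ?expR_ge0 //= in_itv /= ltxx.
have sp : 0 < s by rewrite lt_neqAle eq_sym sn0.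
by apply: tail_gen => // x /=; rewrite in_itv /= andbT.
Qed.

End H.


Section H.
Context {R : realType}.

Lemma sqrtpi_ge1 : 1 <= Num.sqrt (pi : R).
Proof. by rewrite -sqrtr1 ler_sqrt ?pi_ge0 // (le_trans _ (@pi_ge2 R)) // ler1n. Qed.

Lemma e_ge2 : 2 <= expR (1 : R).
Proof. by have := expR_ge1Dx (1 : R); rewrite (_ : 1 + 1 = 2 :> R) //; lra. Qed.

Lemma p_le1 : 1 / (4 * expR 1 * Num.sqrt (pi : R)) <= 1.
Proof.
have h1 := sqrtpi_ge1; have h2 := e_ge2.
rewrite ler_pdivrMr ?mul1r; last by rewrite !mulr_gt0 //; lra.
nra.
Qed.

Lemma lower_pos (m s fs : R) : 0 < s -> fs <= m + s ->
  ((1 / (4 * expR 1 * Num.sqrt pi))%:E <= normal_prob m s `[fs, +oo[)%E.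
Proof.
move=> sp hfs.
have sn0 : s != 0 by rewrite gt_eqF.
pose J : set R := `[(m + s)%R, (m + s * (3/2))%R]%classic.
have mJ : measurable J by exact: measurable_itv.
apply: (@le_trans _ _ (normal_prob m s J)); last first.
  apply: le_measure; rewrite ?inE //.
  move=> x; rewrite /J /= !in_itv /= andbT => /andP[h _].
  exact: le_trans hfs h.
set c := normal_peak s * expR (- (9 / 8)).
apply: (@le_trans _ _ (\int[lebesgue_measure]_(x in J) (cst c%:E) x)%E); last first.
  apply: ge0_le_integral => //.
  - by move=> x _; rewrite lee_fin mulr_ge0 ?normal_peak_ge0 ?expR_ge0.
  - by apply/measurable_EFinP; apply: measurable_funTS; exact: measurable_normal_pdf.
  move=> x; rewrite /J /= in_itv /= => /andP[h1 h2].
  rewrite lee_fin pdf_pos // ler_pM2l ?normal_peak_gt0 // /normal_fun ler_expR.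
  have s2 : 0 < s ^+ 2 *+ 2 by rewrite pmulrn_lgt0 // exprn_gt0.
  have key : (x - m) ^+ 2 <= (9/4) * s ^+ 2 by nra.
  have -> : - (9 / 8) = - ((9/4) * s ^+ 2) / (s ^+ 2 *+ 2) :> R by field.
  by rewrite !mulNr lerN2 ler_pM2r ?invr_gt0.
have LJ : lebesgue_measure J = (s / 2)%:E.
  rewrite /J lebesgue_measure_itv /= lte_fin ifT; last by nra.
  by rewrite -EFinD; congr EFin; field.
rewrite integral_cst //. rewrite [X in (_ * X)%E]LJ -EFinM lee_fin /c.
have qp : 0 < Num.sqrt (pi : R) by rewrite sqrtr_gt0 pi_gt0.
have ep : 0 < expR (1 : R) by exact: expR_gt0.
set q := Num.sqrt (pi : R) in qp *.
set e := expR (1 : R) in ep *.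
have Q0 : 0 < 3/2 * s * q by rewrite !mulr_gt0.
have hQ : Num.sqrt (s ^+ 2 * pi *+ 2) <= 3/2 * s * q.
  have -> : 3/2 * s * q = Num.sqrt ((3/2 * s * q) ^+ 2) by rewrite sqrtr_sqr ger0_norm // ltW.
  rewrite ler_sqrt ?sqr_ge0 //.
  rewrite !exprMn /q sqr_sqrtr ?pi_ge0 //.
  have := @pi_ge0 R; have : 0 <= s ^+ 2 by rewrite sqr_ge0.
  rewrite -mulr_natr; nra.
have hpeak : (3/2 * s * q)^-1 <= normal_peak s.
  rewrite /normal_peak lef_pV2 // posrE sqrtr_gt0.
  by rewrite pmulrn_lgt0 // mulr_gt0 ?pi_gt0 // exprn_gt0.
have h8 : 7/8 <= expR (- (1/8)) :> R.
  by have := expR_ge1Dx (- (1/8) : R); lra.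
have hE : expR (- (9 / 8)) = expR (- (1/8)) / e :> R.
  by rewrite /e -expRB; congr expR; lra.
rewrite hE.
apply: (@le_trans _ _ ((3/2 * s * q)^-1 * (7/8 / e) * (s / 2))).
  have -> : (3/2 * s * q)^-1 * (7/8 / e) * (s / 2) = 1 / (4 * e * q) * (7/6).
    by field; rewrite !gt_eqF.
  by rewrite ler_peMr ?divr_ge0 ?mulr_ge0 ?ltW //; lra.
rewrite ler_pM2r ?divr_gt0 //.
apply: ler_pM => //; first by rewrite invr_ge0 ltW.
  by rewrite divr_ge0 ?ltW //; lra.
by rewrite ler_pM2r ?invr_gt0.
Qed.
End H.


Lemma lower {R : realType} (m s fs : R) : 0 <= s -> fs <= m + s ->
  ((1 / (4 * expR 1 * Num.sqrt pi))%:E <= normal_law m (s ^+ 2) `[fs, +oo[)%E.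
Proof.
move=> s0 hfs; rewrite normal_law_sq //.
have [s00|sn0] := eqVneq s 0.
  have hm : m \in (`[fs, +oo[%classic : set R).
    by rewrite inE /= in_itv /= andbT; move: hfs; rewrite s00 addr0.
  by rewrite diracE hm lee_fin p_le1.
apply: lower_pos => //.
by rewrite lt_neqAle eq_sym sn0.
Qed.

Lemma union_bound {R : realType} {I : Type} {d} {Omega : measurableType d}
  (P : probability Omega R) (F : I -> set Omega) (s : seq I) :
  (forall i, measurable (F i)) ->
  (P (\big[setU/set0]_(i <- s) F i) <= \sum_(i <- s) P (F i))%E.
Proof.
move=> mF; elim: s => [|i s IH]; first by rewrite !big_nil measure0.
rewrite !big_cons; apply: le_trans (measureU2 _ _ _) _ => //.
  exact: bigsetU_measurable.
exact: leeD2l.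
Qed.

Lemma in_bigU {I : eqType} {T : Type} (F : I -> set T) (s : seq I) i w :
  i \in s -> F i w -> (\big[setU/set0]_(j <- s) F j) w.
Proof.
elim: s => [//|j s IH]; rewrite inE big_cons => /orP[/eqP <-|/IH h] Fw.
  by left.
by right; apply: h.
Qed.


Theorem mainTheorem5 (R : realType) (dim : nat) (X : finType)
  (pt : X -> 'rV[R]_dim) (ell : R) (f : X -> R) (B : R)
  (noisevar : X -> R) (T Bud : nat) (R2 delta : R) (t : nat)
  (m : nat) (xs : 'I_m -> X) (ys : 'I_m -> R) (xstar : X)
  (dO : measure_display) (Omega : measurableType dO) (P : probability Omega R)
  (g : Omega -> X -> R) (sel : (X -> R) -> X) :
  let k := se_kernel pt ell in
  let lam := 1 + 2 / T%:R in
  let beta := B + Num.sqrt R2 *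
      Num.sqrt (2 * (max_info_gain k lam m + 1 + ln (2 / delta))) in
  let c := beta * (1 + Num.sqrt (2 * ln (Bud%:R * #|X|%:R * t%:R ^+ 2))) in
  let mu := post_mean k lam xs ys in
  let sd := post_sd k lam xs in
  let S := fun x => f xstar - f x > c * sd x in
  injective pt -> 0 < ell ->
  0 < B -> rkhs_norm_le k f B ->
  (forall x, 0 < noisevar x) ->
  (0 < T)%N -> (0 < Bud)%N -> 0 < R2 -> 0 < delta < 1 -> (1 <= t)%N ->
  (forall x, f x <= f xstar) ->
  (forall x, `|mu x - f x| <= beta * sd x) ->
  gaussian_vector P g mu (fun x x' => beta ^+ 2 * post_cov k lam xs x x') ->
  (forall (h : X -> R) (x : X), h x <= h (sel h)) ->
  measurable [set w | ~ S (sel (g w))] ->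
  ((1 / (4 * expR 1 * Num.sqrt pi) - 1 / t%:R ^+ 2)%:E
     <= P [set w | ~ S (sel (g w))])%E.
Proof.
move=> k lam beta c mu sd S _ _ hB _ _ _ hBud _ _ ht _ hmu hgv hsel hmeas.
have betap : 0 < beta.
  rewrite /beta; apply: (lt_le_trans hB); rewrite lerDl.
  by rewrite mulr_ge0 ?sqrtr_ge0.
have cov0 x : 0 <= post_cov k lam xs x x.
  have := C_nonneg P g mu _ x hgv; rewrite /= pmulr_rge0 //; exact: exprn_gt0.
have sdsq x : beta ^+ 2 * post_cov k lam xs x x = (beta * sd x) ^+ 2.
  by rewrite exprMn /sd /post_sd sqr_sqrtr //; exact: cov0.
have sd0 x : 0 <= beta * sd x by rewrite mulr_ge0 ?sqrtr_ge0 // ltW.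
have mg x : measurable_fun setT (fun w => g w x) by case: hgv.
have law x (A : set R) : measurable A ->
    P ((fun w => g w x) @^-1` A) = normal_law (mu x) ((beta * sd x) ^+ 2) A.
  move=> mA; have := coord_law P g mu _ x 1 A hgv mA.
  rewrite !mul1r /= sdsq => <-.
  by congr (P _); apply/seteqP; split => w /=; rewrite mul1r.
have mpre x (A : set R) : measurable A -> measurable ((fun w => g w x) @^-1` A).
  by move=> mA; rewrite -(setTI (_ @^-1` _)); exact: mg.
set N : R := Bud%:R * #|X|%:R * t%:R ^+ 2.
have Xp : (0 < #|X|)%N by apply/card_gt0P; exists xstar.
have N1 : 1 <= N.
  rewrite /N -natrX -!natrM ler1n; have := ht; have := Xp; have := hBud; clear; nia.
have Np : 0 < N by lra.
set a := Num.sqrt (2 * ln N).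
have a0 : 0 <= a by exact: sqrtr_ge0.
have ea : expR (- a ^+ 2 / 2) = N^-1.
  rewrite sqr_sqrtr ?mulr_ge0 ?ln_ge0 //.
  rewrite (_ : - (2 * ln N) / 2 = - ln N); last by field.
  by rewrite expRN lnK // posrE.
have cE : c = beta * (1 + a) by [].
pose Ex x := (fun w => g w x) @^-1` (`](mu x + (beta * sd x) * a)%R, +oo[%classic : set R).
have mEx x : measurable (Ex x) by apply: mpre; exact: measurable_itv.
have PEx x : (P (Ex x) <= (N^-1)%:E)%E.
  by rewrite /Ex law; [rewrite -ea; exact: tail | exact: measurable_itv].
pose G := (fun w => g w xstar) @^-1` (`[f xstar, +oo[%classic : set R).
have mG : measurable G by apply: mpre; exact: measurable_itv.
have PG : ((1 / (4 * expR 1 * Num.sqrt pi))%:E <= P G)%E.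
  rewrite /G law; last exact: measurable_itv.
  apply: lower => //.
  have := hmu xstar; rewrite -/(mu xstar) => h.
  have := ler_norm (f xstar - mu xstar); rewrite distrC; lra.
pose U := \big[setU/set0]_(x <- index_enum X) Ex x.
have mU : measurable U by apply: bigsetU_measurable => x _; exact: mEx.
have PU : (P U <= (#|X|%:R * N^-1)%:E)%E.
  apply: (le_trans (union_bound P Ex (index_enum X) mEx)).
  apply: (@le_trans _ _ (\sum_(x <- index_enum X) (N^-1)%:E)%E); first by apply: lee_sum => x _; exact: PEx.
  by rewrite sumEFin sumr_const mulr_natl.
have sub : G `<=` [set w | ~ S (sel (g w))] `|` U.
  move=> w Gw; have [Uw|nUw] := pselect (U w); first by right.
  left => /= Sy.
  set y := sel (g w) in Sy.
  have nE : ~ Ex y w by move=> Ey; apply: nUw; exact: (in_bigU _ _ y w (mem_index_enum y)).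
  have h1 : g w y <= mu y + beta * sd y * a.
    by rewrite leNgt; apply/negP => hh; apply: nE; rewrite /Ex /= in_itv /= andbT.
  have h2 : mu y <= f y + beta * sd y.
    have := hmu y; have := ler_norm (mu y - f y); lra.
  have h3 : g w xstar <= g w y by exact: hsel.
  have h4 : f xstar <= g w xstar by move: Gw; rewrite /G /= in_itv /= andbT.
  move: Sy; rewrite /S cE.
  have -> : beta * (1 + a) * sd y = beta * sd y + beta * sd y * a by ring.
  lra.
have key : (P G <= P [set w | ~ S (sel (g w))] + (#|X|%:R * N^-1)%:E)%E.
  apply: le_trans (le_measure _ _ _ sub) _; rewrite ?inE //; first exact: measurableU.
  apply: le_trans (measureU2 _ hmeas mU) _.
  exact: leeD2l.
have hXN : #|X|%:R * N^-1 <= 1 / t%:R ^+ 2.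
  have tp : 0 < t%:R ^+ 2 :> R by rewrite exprn_gt0 // ltr0n.
  have Bp : 1 <= Bud%:R :> R by rewrite ler1n.
  have Xp' : 0 < #|X|%:R :> R by rewrite ltr0n.
  rewrite (_ : #|X|%:R * N^-1 = (Bud%:R)^-1 / t%:R ^+ 2); last first.
    by rewrite /N; field; rewrite !pnatr_eq0 -!lt0n ht hBud Xp.
  rewrite ler_pM2r ?invr_gt0 // invf_le1 //; exact: lt_le_trans Bp.
move: key (le_trans PG key) (measure_ge0 P [set w | ~ S (sel (g w))]).
case: (P [set w | ~ S (sel (g w))]) => [r| |] //= _.
  by rewrite -EFinD !lee_fin => h _; lra.
by move=> _ _; rewrite leey.
Qed.
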